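(* If the generating distribution is Markov to a chain graph satisfying tier symmetry and the causal ordering assumption, then the search space of Greedy Network Search consists of graphs that each belong to their own Markov equivalence class of size 1.
   Context: Setting: LWF chain graphs (graphs with directed and undirected edges and no partially directed cycles) over variables for units $i$ in blocks, each unit having baseline covariates $\mathbf{L}_i$, a treatment $A_i$ and an outcome $Y_i$. The within-unit structure is known and fixed; only cross-unit edges (network ties) between units $i \neq j$ are searched over. Causal ordering assumption: for each unit $i$, $\mathbf{L}_i \subseteq \mathrm{pa}(A_i)$ and $\mathbf{L}_i \cup \{A_i\} \subseteq \mathrm{pa}(Y_i)$, and cross-unit edges respect this ordering (e.g. $A_i \rightarrow Y_j$ allowed, $Y_j \rightarrow A_i$ ruled out). Tier symmetry: edges between variables of the same tier across units are undirected ($L_i - L_j$, $A_i - A_j$, $Y_i - Y_j$), and there are no undirected edges connecting different tiers (e.g. no $A_i - Y_j$). Greedy Network Search: starting from the complete (conditional) Markov random field on one tier ($\mathbf{L}$, $\mathbf{A}$ given $\mathbf{L}$, or $\mathbf{Y}$ given $\mathbf{L},\mathbf{A}$), it repeatedly deletes the single network-tie edge whose removal most increases the pseudolikelihood-based BIC score (PBIC $= 2\ln$ pseudolikelihood $- k\ln n$), stopping when no deletion improves the score. Thus the only edges added/removed in the search space are of the form $L_i - L_j$, $A_i - A_j$, $Y_i - Y_j$, $L_i \rightarrow A_j$, $L_i \rightarrow Y_j$, $A_i \rightarrow Y_j$. Two graphs are Markov equivalent if they imply the same conditional independences under the chain graph global Markov property. *)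

(* Defs.v *)
From mathcomp Require Import all_boot.
Set Implicit Arguments. Unset Strict Implicit. Unset Printing Implicit Defensive.

(* Vertices: L_{u,c} (unit u, covariate c), A_u, Y_u. *)
Definition vtx (U C : finType) : finType := ((U * C) + U + U)%type.

Definition unit_of (U C : finType) (v : vtx U C) : U :=
  match v with
  | inl (inl (u, _)) => u
  | inl (inr u) => u
  | inr u => u
  end.

(* tier: 0 = L, 1 = A, 2 = Y *)
Definition tier (U C : finType) (v : vtx U C) : nat :=
  match v with
  | inl (inl _) => 0
  | inl (inr _) => 1
  | inr _ => 2
  end.

Record mgraph (V : finType) := MGraph { dir : rel V; und : rel V }.

Definition bd_step (V : finType) (G : mgraph V) : rel V :=
  fun a b => dir G a b || und G a b.

(* Chain graph: loopless, undirected edges symmetric, no partially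
   directed (semi-directed) cycle. *)
Definition is_chain_graph (V : finType) (G : mgraph V) : Prop :=
  [/\ forall x, ~~ und G x x,
      forall x, ~~ dir G x x,
      forall x y, und G x y = und G y x
    & forall x y, dir G x y -> ~~ connect (bd_step G) y x].

Definition in_search_space (U C B : finType) (blk : U -> B)
  (G : mgraph (vtx U C)) : Prop :=
  [/\ is_chain_graph G,
      (* causal ordering within each unit: L_i -> A_i, L_i -> Y_i, A_i -> Y_i *)
      forall x y, unit_of x = unit_of y -> tier x < tier y -> dir G x y,
      forall x y, unit_of x != unit_of y -> dir G x y -> tier x < tier y,
      (* tier symmetry: undirected edges only join variables of the same tier *)
      forall x y, und G x y -> tier x = tier y
    &
      forall x y, unit_of x != unit_of y -> bd_step G x y ->
        blk (unit_of x) = blk (unit_of y)].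

Definition same_within (U C : finType) (G H : mgraph (vtx U C)) : Prop :=
  forall x y, unit_of x = unit_of y ->
    dir G x y = dir H x y /\ und G x y = und H x y.

(* LWF global Markov property. *)
Definition anterior (V : finType) (G : mgraph V) (S : {set V}) : {set V} :=
  [set v | [exists s in S, connect (bd_step G) v s]].

(* moral graph of the induced subgraph G_A: x ~ y iff adjacent in G_A or
   both are parents of a common chain component of G_A. *)
Definition moral (V : finType) (G : mgraph V) (A : {set V}) : rel V :=
  fun x y =>
    [&& x \in A, y \in A, x != y &
      [|| dir G x y, dir G y x, und G x y |
        [exists u, exists w,
          [&& u \in A, w \in A, dir G x u, dir G y w &
              connect (fun a b => [&& und G a b, a \in A & b \in A]) u w]]]].

Definition separated (V : finType) (G : mgraph V) (X Y Z : {set V}) : Prop :=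
  let A := anterior G (X :|: Y :|: Z) in
  forall x y, x \in X -> y \in Y ->
    ~~ connect (fun a b => [&& moral G A a b, a \notin Z & b \notin Z]) x y.

Definition markov_equiv (V : finType) (G H : mgraph V) : Prop :=
  forall X Y Z : {set V},
    [disjoint X & Y] -> [disjoint X & Z] -> [disjoint Y & Z] ->
    (separated G X Y Z <-> separated H X Y Z).

(* Main.v *)
Require Import Defs.
From mathcomp Require Import all_boot.
Set Implicit Arguments. Unset Strict Implicit. Unset Printing Implicit Defensive.

Definition adj (V : finType) (G : mgraph V) (x y : V) :=
  [|| dir G x y, dir G y x | und G x y].

Lemma connect_first (V : finType) (e : rel V) x y :
  (forall z, ~~ e x z) -> connect e x y -> y = x.
Proof.
move=> hx /connectP [[|z p] /= hp ->] //.
by move: hp => /andP [hz _]; move: (hx z); rewrite hz.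
Qed.

Lemma sep_nonadj (V : finType) (G : mgraph V) (HG : is_chain_graph G) x y :
  x != y -> ~~ adj G x y ->
  separated G [set x] [set y] (anterior G [set x; y] :\: [set x; y]).
Proof.
case: HG => _ _ usym dcyc xy nadj.
set Z := anterior G [set x; y] :\: [set x; y].
set A := anterior G ([set x] :|: [set y] :|: Z).
have inA : forall v, v \in A -> connect (bd_step G) v x || connect (bd_step G) v y.
  move=> v; rewrite inE => /existsP [s /andP [hs hvs]].
  move: hs; rewrite !inE => /orP [/orP [/eqP sx|/eqP sy]|].
      by rewrite -sx hvs.
    by rewrite -sy hvs orbT.
  case/andP=> _ /existsP [t /andP [ht hst]].
  move: ht; rewrite !inE => /orP [/eqP tx|/eqP ty].
    by rewrite -tx (connect_trans hvs hst).
  by rewrite -ty (connect_trans hvs hst) orbT.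
have nmor : ~~ moral G A x y.
  rewrite /moral; apply/negP => /and4P [_ _ _].
  move: nadj; rewrite /adj => /norP [n1 /norP [n2 n3]]; rewrite (negPf n1) (negPf n2) (negPf n3) /=.
  case/existsP=> u /existsP [w /and5P [uA wA dxu dyw cuw]].
  have symu : symmetric (fun a b => [&& und G a b, a \in A & b \in A]).
    by move=> a b /=; rewrite usym; case: (a \in A); case: (b \in A); rewrite ?andbF ?andbT.
  have cwu : connect (bd_step G) w u.
    rewrite (sym_connect_sym symu) in cuw.
    apply: (connect_sub _ cuw) => a b /andP [hab _].
    by apply: connect1; rewrite /bd_step hab orbT.
  case/orP: (inA u uA) => cu.
    by move: (dcyc _ _ dxu); rewrite cu.
  by move: (dcyc _ _ dyw); rewrite (connect_trans cwu cu).
move=> a b; rewrite !inE => /eqP -> /eqP ->.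
have hx : forall z, ~~ [&& moral G A x z, x \notin Z & z \notin Z].
  move=> z; apply/negP => /and3P [hm _ hz].
  move: (hm) => /and4P [_ zA zx _].
  have zant : z \in anterior G [set x; y].
    rewrite inE; apply/existsP.
    case/orP: (inA z zA) => hc'; [exists x | exists y]; by rewrite !inE eqxx ?orbT.
  move: hz; rewrite !inE; move: zant; rewrite inE => -> ; rewrite andbT negbK => /orP [/eqP zx'|/eqP zy].
    by move: zx; rewrite zx' eqxx.
  by move: nmor; rewrite -zy hm.
apply/negP => hc; move: (connect_first hx hc) => yx.
by move: xy; rewrite yx eqxx.
Qed.

Lemma adj_not_sep (V : finType) (G : mgraph V) x y (Z : {set V}) :
  x != y -> adj G x y -> x \notin Z -> y \notin Z ->
  ~ separated G [set x] [set y] Z.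
Proof.
move=> xy hadj xZ yZ hs.
have := hs x y (set11 x) (set11 y); apply/negP/negPn.
apply: connect1; rewrite xZ yZ andbT andbT /moral xy /=.
have inA : forall v, v \in [set x] :|: [set y] :|: Z ->
    v \in anterior G ([set x] :|: [set y] :|: Z).
  by move=> v hv; rewrite inE; apply/existsP; exists v; rewrite hv connect0.
rewrite !inA ?inE ?eqxx ?orbT //=.
by move: hadj; rewrite /adj => /or3P [->|->|->]; rewrite ?orbT.
Qed.

Lemma adj_eq (V : finType) (G H : mgraph V) x y :
  is_chain_graph G -> is_chain_graph H -> markov_equiv G H -> x != y ->
  adj G x y = adj H x y.
Proof.
move=> cG cH me xy.
have key : forall (G H : mgraph V), is_chain_graph G ->
    (forall Z : {set V}, [disjoint [set y] & Z] -> [disjoint [set x] & Z] ->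
       separated G [set x] [set y] Z -> separated H [set x] [set y] Z) ->
    adj H x y -> adj G x y.
  move=> G1 H1 c1 imp hH; apply/negPn/negP => nG.
  have := sep_nonadj c1 xy nG.
  set Z := anterior G1 [set x; y] :\: [set x; y].
  have xZ : x \notin Z by rewrite !inE eqxx.
  have yZ : y \notin Z by rewrite !inE eqxx orbT.
  move=> s1; apply: (adj_not_sep xy hH xZ yZ).
  by apply: imp => //; rewrite disjoints1.
have dxy : [disjoint [set x] & [set y]] by rewrite disjoints1 inE.
apply/idP/idP.
  move=> h; refine (key H G cH _ h) => Z d1 d2 s.
  exact: (proj2 (me _ _ _ dxy d2 d1) s).
move=> h; refine (key G H cG _ h) => Z d1 d2 s.
exact: (proj1 (me _ _ _ dxy d2 d1) s).
Qed.

Theorem lemma3 (U C B : finType) (blk : U -> B) (G H : mgraph (vtx U C)) :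
  in_search_space blk G -> in_search_space blk H ->
  same_within G H -> markov_equiv G H ->
  forall x y, dir G x y = dir H x y /\ und G x y = und H x y.
Proof.
move=> [cG wG oG tG _] [cH wH oH tH _] sw me x y.
case: (eqVneq (unit_of x) (unit_of y)) => uxy; first exact: sw.
have xy : x != y by apply: contraNneq uxy => ->.
have yx : unit_of y != unit_of x by rewrite eq_sym.
have ea := adj_eq cG cH me xy.
case: (ltngtP (tier x) (tier y)) => t.
- have nu : forall K : mgraph (vtx U C), (forall x y, und K x y -> tier x = tier y) ->
      und K x y = false.
    by move=> K tK; apply/negP => /tK e; move: t; rewrite e ltnn.
  have nd : forall K : mgraph (vtx U C),
      (forall x y, unit_of x != unit_of y -> dir K x y -> tier x < tier y) ->
      dir K y x = false.
    by move=> K oK; apply/negP => /(oK _ _ yx) t'; move: (ltn_trans t t'); rewrite ltnn.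
  move: ea; rewrite /adj (nu _ tG) (nu _ tH) (nd _ oG) (nd _ oH) !orbF.
  by move=> ->.
- have nu : forall K : mgraph (vtx U C), (forall x y, und K x y -> tier x = tier y) ->
      und K x y = false.
    by move=> K tK; apply/negP => /tK e; move: t; rewrite e ltnn.
  have nd : forall K : mgraph (vtx U C),
      (forall x y, unit_of x != unit_of y -> dir K x y -> tier x < tier y) ->
      dir K x y = false.
    by move=> K oK; apply/negP => /(oK _ _ uxy) t'; move: (ltn_trans t t'); rewrite ltnn.
  by rewrite (nu _ tG) (nu _ tH) (nd _ oG) (nd _ oH).
- have nd : forall K : mgraph (vtx U C),
      (forall x y, unit_of x != unit_of y -> dir K x y -> tier x < tier y) ->
      dir K x y = false /\ dir K y x = false.
    by move=> K oK; split; apply/negP; [move/(oK _ _ uxy) | move/(oK _ _ yx)]; rewrite t ltnn.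
  have [g1 g2] := nd _ oG; have [h1 h2] := nd _ oH.
  by move: ea; rewrite /adj g1 g2 h1 h2 /= => ->.
Qed.
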